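(* Let $(G_1,\prec_1),(G_2,\prec_2),(G_1',\prec_1'),(G_2',\prec_2')$ be POP-graphs such that the compositions below are defined and $(G_2,\prec_2)\circ(G_1,\prec_1)=(G_2',\prec_2')\circ(G_1',\prec_1')$. Then $(G_1,\prec_1)=(G_1',\prec_1')$ implies $(G_2,\prec_2)=(G_2',\prec_2')$, and $(G_2,\prec_2)=(G_2',\prec_2')$ implies $(G_1,\prec_1)=(G_1',\prec_1')$.
   Context: A progressive graph is a finite directed acyclic graph (parallel edges allowed) in which every source and every sink has degree one; degree-one vertices are boundary vertices. An input edge is an edge whose initial vertex is a boundary vertex; an output edge one whose terminal vertex is a boundary vertex. For edges write $e\to e'$ if $e\neq e'$ and there is a directed path whose first edge is $e$ and last edge is $e'$. A planar order on $G$ is a linear order $\prec$ on $E(G)$ such that (P1) $e_1\to e_2$ implies $e_1\prec e_2$; (P2) if $e_1\prec e_2\prec e_3$ and $e_1\to e_3$ then $e_1\to e_2$ or $e_2\to e_3$. A POP-graph is a progressive graph with a planar order. Equality of POP-graphs means isomorphism: bijections of vertices and of edges preserving incidence and direction of edges and the planar orders. Composition: let $(G_1,\prec_1)$, $(G_2,\prec_2)$ be POP-graphs, $G_1$ with output edges $o_1\prec_1\cdots\prec_1 o_n$ and $G_2$ with input edges $i_1\prec_2\cdots\prec_2 i_n$. The progressive graph $G_2\circ G_1$ is obtained from $G_1\sqcup G_2$ by deleting the sinks of $G_1$, the sources of $G_2$ and the edges $o_k,i_k$, and adding for each $k$ a new edge $\overline{e_k}$ from the initial vertex of $o_k$ to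 the terminal vertex of $i_k$. Let $Q_1=\{e\in E(G_1): e\prec_1 o_1\}$, $Q_k=\{e: o_{k-1}\prec_1 e\prec_1 o_k\}$ ($2\le k\le n$), $P_k=\{e\in E(G_2): i_k\prec_2 e\prec_2 i_{k+1}\}$ ($1\le k\le n-1$), $P_n=\{e: i_n\prec_2 e\}$. The order $\prec_2\circ\prec_1$ on $E(G_2\circ G_1)$ lists $Q_1,\{\overline{e_1}\},P_1,\dots,Q_n,\{\overline{e_n}\},P_n$ consecutively, each $Q_k$ ordered by $\prec_1$ and each $P_k$ by $\prec_2$; $(G_2,\prec_2)\circ(G_1,\prec_1):=(G_2\circ G_1,\prec_2\circ\prec_1)$. *)

(* Defs.v *)
From mathcomp Require Import all_boot.
Set Implicit Arguments. Unset Strict Implicit. Unset Printing Implicit Defensive.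

Record pgraph := PGraph {
  pV : finType;
  pE : finType;
  psrc : pE -> pV;
  ptgt : pE -> pV
}.

Section Basics.
Variable G : pgraph.
Implicit Types (v : pV G) (e : pE G).

Definition deg v : nat := #|[set e | psrc e == v]| + #|[set e | ptgt e == v]|.
Definition is_source v : bool := [forall e, ptgt e != v].
Definition is_sink v : bool := [forall e, psrc e != v].
Definition boundary v : bool := deg v == 1.

Definition erel : rel (pE G) := fun a b => ptgt a == psrc b.

Definition arrow e e' : bool := (e != e') && connect erel e e'.

Definition acyclic : Prop := forall e e', erel e e' -> ~~ connect erel e' e.

Definition progressive : Prop :=
  acyclic /\ forall v, is_source v || is_sink v -> deg v = 1.

Definition is_input e : bool := boundary (psrc e).
Definition is_output e : bool := boundary (ptgt e).

Definition planar_order (lt : rel (pE G)) : Prop :=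
  [/\ irreflexive lt, transitive lt,
      (forall x y, x != y -> lt x y || lt y x),
      (forall e1 e2, arrow e1 e2 -> lt e1 e2)
    & (forall e1 e2 e3, lt e1 e2 -> lt e2 e3 -> arrow e1 e3 ->
         arrow e1 e2 || arrow e2 e3) ].

Lemma src_not_sink e : ~~ is_sink (psrc e).
Proof. by apply/forallP => /(_ e); rewrite eqxx. Qed.

Lemma tgt_not_source e : ~~ is_source (ptgt e).
Proof. by apply/forallP => /(_ e); rewrite eqxx. Qed.

Lemma tgt_not_sink (h : progressive) e : ~~ is_output e -> ~~ is_sink (ptgt e).
Proof.
move=> ne; apply/negP => hs; move: ne; rewrite /is_output /boundary.
by rewrite h.2 ?hs ?orbT.
Qed.

Lemma src_not_source (h : progressive) e : ~~ is_input e -> ~~ is_source (psrc e).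
Proof.
move=> ne; apply/negP => hs; move: ne; rewrite /is_input /boundary.
by rewrite h.2 ?hs.
Qed.

End Basics.

Record popgraph := POP {
  pg :> pgraph;
  plt : rel (pE pg);
  pprog : progressive pg;
  pplanar : planar_order plt
}.

(* Equality of POP-graphs (more generally of ordered graphs) = isomorphism:
   bijections of vertices and edges preserving incidence/direction and order *)
Definition ord_iso (G H : pgraph) (ltG : rel (pE G)) (ltH : rel (pE H)) : Prop :=
  exists (fV : pV G -> pV H) (fE : pE G -> pE H),
    [/\ bijective fV, bijective fE,
        (forall e, fV (psrc e) = psrc (fE e)),
        (forall e, fV (ptgt e) = ptgt (fE e))
      & (forall e e', ltH (fE e) (fE e') = ltG e e')].

Definition pop_eq (G H : popgraph) : Prop := ord_iso (@plt G) (@plt H).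

Section Composition.
Variables G1 G2 : popgraph.

(* number of output edges of G1 strictly below e (0-based rank for outputs) *)
Definition cntOut (e : pE G1) : nat := #|[set o | is_output o & @plt G1 o e]|.
Definition cntIn (e : pE G2) : nat := #|[set i | is_input i & @plt G2 i e]|.
Definition nOut : nat := #|[set o : pE G1 | is_output o]|.
Definition nIn : nat := #|[set i : pE G2 | is_input i]|.

Definition composable : Prop := nOut = nIn.

Definition cV : finType := Finite.clone
  ({v : pV G1 | ~~ is_sink v} + {v : pV G2 | ~~ is_source v})%type _.

(* edges: E(G1) minus outputs, E(G2) minus inputs, and the new edges
   bar e_k, represented by the pair (o_k, i_k) of the k-th output edge of G1
   and the k-th input edge of G2 *)
Definition newE : finType := Finite.clone
  {p : pE G1 * pE G2 | [&& is_output p.1, is_input p.2 & cntOut p.1 == cntIn p.2]} _.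
Definition cE : finType := Finite.clone
  (({e : pE G1 | ~~ is_output e} + {e : pE G2 | ~~ is_input e}) + newE)%type _.

Definition csrc (e : cE) : cV :=
  match e with
  | inl (inl e1) => inl (exist _ (psrc (val e1)) (src_not_sink (val e1)))
  | inl (inr e2) => inr (exist _ (psrc (val e2)) (src_not_source (pprog G2) (valP e2)))
  | inr p => inl (exist _ (psrc (val p).1) (src_not_sink (val p).1))
  end.

Definition ctgt (e : cE) : cV :=
  match e with
  | inl (inl e1) => inl (exist _ (ptgt (val e1)) (tgt_not_sink (pprog G1) (valP e1)))
  | inl (inr e2) => inr (exist _ (ptgt (val e2)) (tgt_not_source (val e2)))
  | inr p => inr (exist _ (ptgt (val p).2) (tgt_not_source (val p).2))
  end.

Definition comp_graph : pgraph := PGraph csrc ctgt.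

(* Position of the block containing an edge in the list
   Q_1, {bar e_1}, P_1, ..., Q_n, {bar e_n}, P_n  (0-based, 3 blocks per k):
   - e in E(G1) non-output lies in Q_{j+1} where j = #outputs below e (if j < n);
   - bar e_{j+1} is at position 3j+1;
   - e in E(G2) non-input lies in P_c where c = #inputs below e (if c >= 1).
   None = the edge lies in no block. *)
Definition cblock (e : pE comp_graph) : option nat :=
  match e with
  | inl (inl e1) => let j := cntOut (val e1) in
                    if j < nOut then Some (3 * j) else None
  | inl (inr e2) => let c := cntIn (val e2) in
                    if 0 < c then Some (3 * c - 1) else None
  | inr p => Some (3 * cntOut (val p).1 + 1)
  end.

Definition cwithin (e e' : pE comp_graph) : bool :=
  match e, e' with
  | inl (inl a), inl (inl b) => @plt G1 (val a) (val b)
  | inl (inr a), inl (inr b) => @plt G2 (val a) (val b)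
  | _, _ => false
  end.

Definition comp_lt : rel (pE comp_graph) := fun e e' =>
  match cblock e, cblock e' with
  | Some a, Some b => (a < b) || ((a == b) && cwithin e e')
  | _, _ => false
  end.

End Composition.

(* Main.v *)
Require Import Defs.
From mathcomp Require Import all_boot zify.
Set Implicit Arguments. Unset Strict Implicit. Unset Printing Implicit Defensive.

Section Rank.
Variables (T : finType) (lt : rel T).
Hypotheses (irr : irreflexive lt) (tr : transitive lt)
  (tot : forall x y, x != y -> lt x y || lt y x).
Variable S : pred T.
Definition rk x := #|[set s | S s & lt s x]|.

Lemma rk_mono x y : lt x y -> rk x <= rk y.
Proof.
move=> h; apply: subset_leq_card; apply/subsetP=> s; rewrite !inE.
by case/andP=> -> /tr ->.
Qed.

Lemma rk_monoS x y : S x -> lt x y -> rk x < rk y.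
Proof.
move=> hs h; rewrite /rk.
have hx : x \notin [set s | S s & lt s x] by rewrite inE irr andbF.
have <- : #|x |: [set s | S s & lt s x]| = #|[set s | S s & lt s x]|.+1.
  by rewrite cardsU1 hx.
apply: subset_leq_card; apply/subsetP=> s; rewrite !inE.
case/orP=> [/eqP->|]; first by rewrite hs h.
by case/andP=> -> /tr ->.
Qed.

Lemma rk_lt x y : rk x < rk y -> lt x y.
Proof.
move=> h; case: (eqVneq x y) => [exy|nxy]; first by rewrite exy ltnn in h.
case/orP: (tot nxy) => // /rk_mono; by rewrite leqNgt h.
Qed.

Lemma rkS_lt x y : S x -> lt x y = (rk x < rk y).
Proof. by move=> hs; apply/idP/idP => [/(rk_monoS hs)|/rk_lt]. Qed.

Lemma rkS_le x y : S y -> x != y -> lt x y = (rk x <= rk y).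
Proof.
move=> hs nxy; apply/idP/idP => [/rk_mono//|h].
case/orP: (tot nxy) => // /(rk_monoS hs); by rewrite ltnNge h.
Qed.

Lemma rk_inj x y : S x -> S y -> rk x = rk y -> x = y.
Proof.
move=> hx hy e; apply/eqP; apply/negPn/negP => nxy.
case/orP: (tot nxy) => [/(rk_monoS hx)|/(rk_monoS hy)]; by rewrite e ltnn.
Qed.

Lemma rk_card x : S x -> rk x < #|[set s | S s]|.
Proof.
move=> hx; rewrite /rk.
have hx' : x \notin [set s | S s & lt s x] by rewrite inE irr andbF.
have <- : #|x |: [set s | S s & lt s x]| = #|[set s | S s & lt s x]|.+1.
  by rewrite cardsU1 hx'.
apply: subset_leq_card; apply/subsetP=> s; rewrite !inE.
by case/orP=> [/eqP->//|/andP[]].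
Qed.

Lemma rk_surj j : j < #|[set s | S s]| -> exists2 s, S s & rk s = j.
Proof.
move=> hj.
have [m' em] : exists m', #|[set s | S s]| = m'.+1.
  by case: #|_| hj => // m' _; exists m'.
pose f := fun s => (inord (rk s) : 'I_m'.+1).
have finj : {in [set s | S s] &, injective f}.
  move=> x y; rewrite !inE => hx hy /(congr1 val) /=.
  rewrite !inordK; [by apply: rk_inj| |]; rewrite -ltnS -em; exact: rk_card.
have hc := card_in_imset finj.
have : f @: [set s | S s] =i [set: 'I_m'.+1].
  apply/subset_cardP; first by rewrite hc cardsT card_ord em.
  exact: subsetT.
move/(_ (inord j)); rewrite inE => /imsetP[s]; rewrite inE => hs.
move/(congr1 val) => /=; rewrite !inordK //; last (by rewrite -em); last first.
  rewrite -ltnS -em; exact: rk_card.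
by move=> ->; exists s.
Qed.

Lemma rk_lt_split x y : lt x y = (rk x < rk y) || (rk x == rk y) && lt x y.
Proof.
apply/idP/idP => [h|/orP[/rk_lt//|/andP[_ ->]//]].
by have := rk_mono h; rewrite leq_eqVlt => /orP[->|->]; rewrite ?h ?orbT.
Qed.

End Rank.

Lemma connect_last (T : finType) (e : rel T) x y :
  connect e x y -> x != y -> exists2 z, connect e x z & e z y.
Proof.
case/connectP=> p; elim/last_ind: p => [|p z _] /=; first by move=> _ ->; rewrite eqxx.
rewrite rcons_path last_rcons => /andP[hp hz] -> _.
by exists (last x p) => //; apply/connectP; exists p.
Qed.

Lemma connect_first (T : finType) (e : rel T) x y :
  connect e x y -> x != y -> exists2 z, e x z & connect e z y.
Proof.
case/connectP=> [[|z p]] /=; first by move=> _ ->; rewrite eqxx.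
by case/andP=> hz hp -> _; exists z => //; apply/connectP; exists p.
Qed.

Lemma conn_ind (T : finType) (e : rel T) (P : T -> Prop) x :
  P x -> (forall y z, P y -> e y z -> P z) -> forall y, connect e x y -> P y.
Proof.
move=> Px hs y /connectP[p]; elim: p x Px => [|z p IH] x Px /=; first by move=> _ ->.
by case/andP=> hz hp hl; apply: (IH z) => //; apply: hs hz.
Qed.

Lemma conn_ind_rev (T : finType) (e : rel T) (P : T -> Prop) y :
  P y -> (forall x z, P z -> e x z -> P x) -> forall x, connect e x y -> P x.
Proof.
move=> Py hs x /connectP[p]; elim/last_ind: p y Py => [|p z IH] y Py /=.
  by move=> _ <-.
rewrite rcons_path last_rcons => /andP[hp hz] ey; subst y.
apply: (IH (last x p)) => //; exact: hs hz.
Qed.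

Section GraphFacts.
Variable G : popgraph.
Let lt := @plt G.
Let irr : irreflexive lt. Proof. by case: (pplanar G). Qed.
Let tr : transitive lt. Proof. by case: (pplanar G). Qed.
Let tot : forall x y, x != y -> lt x y || lt y x. Proof. by case: (pplanar G). Qed.
Let P1 : forall e1 e2, arrow e1 e2 -> lt e1 e2. Proof. by case: (pplanar G). Qed.
Let P2 : forall e1 e2 e3, lt e1 e2 -> lt e2 e3 -> arrow e1 e3 ->
         arrow e1 e2 || arrow e2 e3. Proof. by case: (pplanar G). Qed.

Lemma deg_ge2 (v : pV G) (y z : pE G) : ptgt y = v -> psrc z = v -> 1 < deg v.
Proof.
move=> hy hz; rewrite /deg.
have h1 : 0 < #|[set e | psrc e == v]| by apply/card_gt0P; exists z; rewrite inE hz.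
have h2 : 0 < #|[set e | ptgt e == v]| by apply/card_gt0P; exists y; rewrite inE hy.
by rewrite -(addn1 1) leq_add.
Qed.

Lemma erel_ninput (y z : pE G) : erel y z -> ~~ is_input z.
Proof. by move/eqP=> h; rewrite /is_input /boundary (gtn_eqF (deg_ge2 h erefl)). Qed.

Lemma erel_noutput (y z : pE G) : erel y z -> ~~ is_output y.
Proof. by move/eqP=> h; rewrite /is_output /boundary (gtn_eqF (deg_ge2 erefl (esym h))). Qed.

Lemma no_arrow_input (x i : pE G) : is_input i -> ~~ arrow x i.
Proof.
move=> hi; apply/negP=> /andP[nxi /connect_last /(_ nxi)] [z _ /erel_ninput].
by rewrite hi.
Qed.

Lemma no_arrow_output (o y : pE G) : is_output o -> ~~ arrow o y.
Proof.
move=> ho; apply/negP=> /andP[nxi /connect_first /(_ nxi)] [z /erel_noutput].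
by rewrite ho.
Qed.

Lemma erel_neq (y z : pE G) : erel y z -> y != z.
Proof.
move=> h; apply/eqP=> e; subst z.
by move: (pprog G).1 => /(_ y y h); rewrite connect0.
Qed.

Let rkT := rk lt predT.

Lemma input_ancestor (a : pE G) : ~~ is_input a -> exists2 i, is_input i & arrow i a.
Proof.
move=> na.
pose A := [pred x | connect (@erel G) x a].
have Aa : A a by rewrite /A /= connect0.
case: (arg_minnP rkT Aa) => x Ax xmin.
have [hx|hx] := boolP (is_input x).
  exists x => //; rewrite /arrow (_ : connect _ x a = true) ?andbT //.
  by apply/eqP=> e; move: na; rewrite -e hx.
have := src_not_source (pprog G) hx; rewrite /is_source negb_forall.
case/existsP=> y; rewrite negbK => hy.
have eyx : erel y x by rewrite /erel.
have Ay : A y by rewrite /A /=; apply: connect_trans (connect1 eyx) Ax.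
have := xmin y Ay; rewrite leqNgt.
have ayx : arrow y x by rewrite /arrow erel_neq // connect1.
by rewrite (rk_monoS irr tr (S:=predT)) //; apply: P1.
Qed.

Lemma output_descendant (a : pE G) : ~~ is_output a -> exists2 o, is_output o & arrow a o.
Proof.
move=> na.
pose A := [pred x | connect (@erel G) a x].
have Aa : A a by rewrite /A /= connect0.
pose rkT' := fun x => #|[set s | lt x s]|.
case: (arg_minnP rkT' Aa) => x Ax xmin.
have [hx|hx] := boolP (is_output x).
  exists x => //; rewrite /arrow (_ : connect _ a x = true) ?andbT //.
  by apply/eqP=> e; move: na; rewrite e hx.
have := tgt_not_sink (pprog G) hx; rewrite /is_sink negb_forall.
case/existsP=> y; rewrite negbK => hy.
have eyx : erel x y by rewrite /erel eq_sym.
have Ay : A y by rewrite /A /=; apply: connect_trans Ax (connect1 eyx).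
have := xmin y Ay; rewrite leqNgt.
have ayx : arrow x y by rewrite /arrow erel_neq // connect1.
have lxy := P1 ayx.
suff -> : rkT' y < rkT' x by [].
rewrite /rkT'.
have hy' : y \notin [set s | lt y s] by rewrite inE irr.
have <- : #|y |: [set s | lt y s]| = #|[set s | lt y s]|.+1 by rewrite cardsU1 hy'.
apply: subset_leq_card; apply/subsetP=> s; rewrite !inE.
by case/orP=> [/eqP->//|/(tr lxy)].
Qed.

Lemma input_arrow (i a : pE G) : is_input i -> ~~ is_input a ->
  rk lt (@is_input G) a = (rk lt (@is_input G) i).+1 -> arrow i a.
Proof.
move=> hi na hr.
case: (input_ancestor na) => i' hi' ai'.
have l' := P1 ai'.
have h1 : rk lt (@is_input G) i' < rk lt (@is_input G) a by rewrite -(rkS_lt irr tr tot (S:=@is_input G)).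
have [e|ne] := eqVneq (rk lt (@is_input G) i') (rk lt (@is_input G) i).
  by rewrite -(rk_inj irr tr tot hi' hi e).
have li'i : lt i' i by rewrite (rkS_lt irr tr tot (S:=@is_input G)) // ltn_neqAle ne -ltnS -hr.
have lia : lt i a by rewrite (rkS_lt irr tr tot (S:=@is_input G)) // hr.
case/orP: (P2 li'i lia ai') => //.
by rewrite (negbTE (no_arrow_input _ hi)).
Qed.

Lemma output_arrow (o a : pE G) : is_output o -> ~~ is_output a ->
  rk lt (@is_output G) a = rk lt (@is_output G) o -> arrow a o.
Proof.
move=> ho na hr.
case: (output_descendant na) => o' ho' ao'.
have l' := P1 ao'.
have nao : a != o by apply/eqP=> e; move: na; rewrite e ho.
have lao : lt a o by rewrite (rkS_le irr tr tot (S:=@is_output G)) // hr.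
have h1 : rk lt (@is_output G) a <= rk lt (@is_output G) o' by apply: (rk_mono tr).
have [e|ne] := eqVneq (rk lt (@is_output G) o') (rk lt (@is_output G) o).
  by rewrite (rk_inj irr tr tot ho' ho e) in ao'.
have loo' : lt o o' by rewrite (rkS_lt irr tr tot (S:=@is_output G)) // ltn_neqAle eq_sym ne -hr.
case/orP: (P2 lao loo' ao') => //.
by rewrite (negbTE (no_arrow_output _ ho)).
Qed.

Lemma vertex_incident (v : pV G) : exists e, (psrc e == v) || (ptgt e == v).
Proof.
case: (boolP [exists e, (psrc e == v) || (ptgt e == v)]) => [/existsP//|].
rewrite negb_exists => /forallP h.
have hs : is_source v.
  by apply/forallP=> e; move: (h e); rewrite negb_or => /andP[].
have := (pprog G).2 v; rewrite hs => /(_ isT).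
rewrite /deg.
have -> : [set e | psrc e == v] = set0.
  by apply/setP=> e; rewrite !inE; move: (h e); rewrite negb_or => /andP[/negbTE].
have -> : [set e | ptgt e == v] = set0.
  by apply/setP=> e; rewrite !inE; move: (h e); rewrite negb_or => /andP[_ /negbTE].
by rewrite cards0.
Qed.

Lemma src_input (a b : pE G) : is_input a -> (psrc a == psrc b) = (a == b).
Proof.
move=> ha; apply/idP/idP => [/eqP e|/eqP->//]; apply/negPn/negP => nab.
move: ha; rewrite /is_input /boundary /deg.
have : 1 < #|[set e | psrc e == psrc a]|.
  have <- : #|[set a; b]| = 2 by rewrite cards2 nab.
  by apply: subset_leq_card; apply/subsetP=> z; rewrite !inE => /orP[]/eqP->; rewrite ?e.
by move=> h; rewrite gtn_eqF // ltn_addr.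
Qed.

Lemma tgt_output (a b : pE G) : is_output a -> (ptgt a == ptgt b) = (a == b).
Proof.
move=> ha; apply/idP/idP => [/eqP e|/eqP->//]; apply/negPn/negP => nab.
move: ha; rewrite /is_output /boundary /deg.
have : 1 < #|[set e | ptgt e == ptgt a]|.
  have <- : #|[set a; b]| = 2 by rewrite cards2 nab.
  by apply: subset_leq_card; apply/subsetP=> z; rewrite !inE => /orP[]/eqP->; rewrite ?e.
by move=> h; rewrite gtn_eqF // ltn_addl.
Qed.

Lemma src_input_tgt (a b : pE G) : is_input a -> (psrc a == ptgt b) = false.
Proof.
move=> ha; apply/negP=> /eqP e; move: ha.
by rewrite /is_input /boundary (gtn_eqF (deg_ge2 (esym e) erefl)).
Qed.

Lemma tgt_output_src (a b : pE G) : is_output a -> (psrc b == ptgt a) = false.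
Proof.
move=> ha; apply/negP=> /eqP e; move: ha.
by rewrite /is_output /boundary (gtn_eqF (deg_ge2 erefl e)).
Qed.

End GraphFacts.


Lemma card_via (T U : finType) (f : T -> option U) (A : {pred T}) (B : {pred U}) :
  {in A &, injective f} -> (forall x, x \in A -> exists2 y, y \in B & f x = Some y) ->
  #|A| <= #|B|.
Proof.
move=> finj hf; rewrite -(card_in_imset finj) -(card_imset B Some_inj).
apply: subset_leq_card; apply/subsetP=> z /imsetP[x xA ->].
by case: (hf x xA) => y yB ->; apply: imset_f.
Qed.

Lemma card_via_eq (T U : finType) (f : T -> option U) (A : {pred T}) (B : {pred U}) :
  {in A &, injective f} -> (forall x, x \in A -> exists2 y, y \in B & f x = Some y) ->
  (forall y, y \in B -> exists2 x, x \in A & f x = Some y) ->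
  #|A| = #|B|.
Proof.
move=> finj hf hg; apply/eqP; rewrite eqn_leq (card_via finj hf) /=.
rewrite -(card_in_imset finj) -(card_imset B Some_inj).
apply: subset_leq_card; apply/subsetP=> z /imsetP[y yB ->].
by case: (hg y yB) => x xA <-; apply: imset_f.
Qed.

Lemma card_lt_strict (T : finType) (A B : {pred T}) x :
  {subset A <= B} -> x \in B -> x \notin A -> #|A| < #|B|.
Proof.
move=> sAB xB xA; apply: proper_card; apply/properP; split; last by exists x.
by apply/subsetP.
Qed.

Lemma card_U1_le (T : finType) (A : {set T}) (B : {pred T}) x :
  {subset A <= B} -> x \in B -> x \notin A -> #|A| < #|B|.
Proof. exact: card_lt_strict. Qed.

Ltac slia := simpl in *; lia.

Section Comp.
Variables (G1 G2 : popgraph).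
Hypothesis hc : composable G1 G2.
Notation H := (comp_graph G1 G2).
Notation EH := (pE H).

Let lt1 := @plt G1.
Let lt2 := @plt G2.
Let irr1 : irreflexive lt1. Proof. by case: (pplanar G1). Qed.
Let tr1 : transitive lt1. Proof. by case: (pplanar G1). Qed.
Let tot1 : forall x y, x != y -> lt1 x y || lt1 y x. Proof. by case: (pplanar G1). Qed.
Let A1 : forall e1 e2, arrow e1 e2 -> lt1 e1 e2. Proof. by case: (pplanar G1). Qed.
Let irr2 : irreflexive lt2. Proof. by case: (pplanar G2). Qed.
Let tr2 : transitive lt2. Proof. by case: (pplanar G2). Qed.
Let tot2 : forall x y, x != y -> lt2 x y || lt2 y x. Proof. by case: (pplanar G2). Qed.
Let A2 : forall e1 e2, arrow e1 e2 -> lt2 e1 e2. Proof. by case: (pplanar G2). Qed.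

Definition cO (x : pE G1) := rk lt1 (@is_output G1) x.
Definition cI (x : pE G2) := rk lt2 (@is_input G2) x.
Definition nn := nOut G1.

Lemma cntOutE x : cntOut x = cO x. Proof. by []. Qed.
Lemma cntInE x : cntIn x = cI x. Proof. by []. Qed.
Lemma nOutE : nOut G1 = #|[set s | @is_output G1 s]|. Proof. by []. Qed.
Lemma nInE : nn = #|[set s | @is_input G2 s]|. Proof. exact: hc. Qed.

Lemma cO_lt x : cO x < nn.
Proof.
rewrite /nn nOutE.
have [hx|hx] := boolP (is_output x); first exact: rk_card.
case: (output_descendant hx) => o ho /A1 lxo.
apply: leq_ltn_trans (rk_mono tr1 _ lxo) _; exact: rk_card.
Qed.

Lemma cI_le x : cI x <= nn.
Proof.
rewrite nInE; apply: subset_leq_card; apply/subsetP=> s; rewrite !inE.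
by case/andP.
Qed.

Lemma cI_gt0 x : ~~ is_input x -> 0 < cI x.
Proof.
move=> hx; case: (input_ancestor hx) => i hi /A2 lix.
apply: leq_ltn_trans (rk_monoS irr2 tr2 hi lix); done.
Qed.

Definition blk (e : EH) : nat := odflt 0 (cblock e).

Lemma cblockE e : cblock e = Some (blk e).
Proof.
rewrite /blk; case: e => [[x|x]|p] //=.
  by rewrite cntOutE cO_lt.
by rewrite cntInE cI_gt0 //; case: x.
Qed.

Lemma blk_l (x : {e : pE G1 | ~~ is_output e}) : blk (inl (inl x)) = 3 * cO (val x).
Proof. by rewrite /blk /= cntOutE cO_lt. Qed.

Lemma blk_r (x : {e : pE G2 | ~~ is_input e}) : blk (inl (inr x)) = 3 * cI (val x) - 1.
Proof. by rewrite /blk /= cntInE cI_gt0 //; case: x. Qed.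

Lemma blk_n (p : newE G1 G2) : blk (inr p) = 3 * cO (val p).1 + 1.
Proof. by []. Qed.

Lemma cI_r (x : {e : pE G2 | ~~ is_input e}) : 0 < cI (val x).
Proof. by apply: cI_gt0; case: x. Qed.

Lemma newP (p : newE G1 G2) :
  [/\ is_output (val p).1, is_input (val p).2 & cO (val p).1 = cI (val p).2].
Proof. by case: p => [[o i]] /= /and3P[-> -> /eqP]. Qed.

Lemma comp_ltE a b : comp_lt a b = (blk a < blk b) || (blk a == blk b) && cwithin a b.
Proof. by rewrite /comp_lt !cblockE. Qed.

Lemma blk_bound e : blk e < 3 * nn.
Proof.
case: e => [[x|x]|p].
- by rewrite blk_l; have := cO_lt (val x); lia.
- by rewrite blk_r; have := cI_le (val x); have := cI_r x; lia.
- by rewrite blk_n; have := cO_lt (val p).1; lia.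
Qed.

Lemma new_exists j : j < nn -> exists p : newE G1 G2, cO (val p).1 = j.
Proof.
move=> hj.
case: (rk_surj irr1 tr1 tot1 (S:=@is_output G1) hj) => o ho ro.
rewrite nInE in hj.
case: (rk_surj irr2 tr2 tot2 (S:=@is_input G2) hj) => i hi ri.
have hp : [&& is_output (o, i).1, is_input (o, i).2 & cntOut (o, i).1 == cntIn (o, i).2].
  by rewrite /= ho hi cntOutE cntInE /cO /cI ro ri eqxx.
by exists (exist _ (o, i) hp).
Qed.

Lemma blk_exists_new j : j < nn -> exists N : EH, blk N = 3 * j + 1.
Proof. by case/new_exists=> p hp; exists (inr p); rewrite blk_n hp. Qed.

Definition pr1 (h : EH) : option (pE G1) :=
  match h with inl (inl x) => Some (val x) | inl (inr _) => None | inr p => Some (val p).1 end.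
Definition pr2 (h : EH) : option (pE G2) :=
  match h with inl (inl _) => None | inl (inr x) => Some (val x) | inr p => Some (val p).2 end.

Lemma pr1_inj h h' a : pr1 h = Some a -> pr1 h' = Some a -> h = h'.
Proof.
case: h => [[x|x]|p] //=; case: h' => [[y|y]|q] //= [<-] //.
- by move=> [/val_inj ->].
- by move=> [e]; have [o _ _] := newP q; move: (valP x) => /=; rewrite -e o.
- by move=> [e]; have [o _ _] := newP p; move: (valP y) => /=; rewrite e o.
- case: p => [[a1 b1] hp]; case: q => [[a2 b2] hq] /= [ea]; subst a2.
  congr inr; apply: val_inj => /=; congr pair.
  case/and3P: hp => _ i1 /eqP e1; case/and3P: hq => _ i2 /eqP e2.
  by apply: (rk_inj irr2 tr2 tot2 i1 i2); exact: (etrans (esym e1) e2).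
Qed.

Lemma pr2_inj h h' a : pr2 h = Some a -> pr2 h' = Some a -> h = h'.
Proof.
case: h => [[x|x]|p] //=; case: h' => [[y|y]|q] //= [<-] //.
- by move=> [/val_inj ->].
- by move=> [e]; have [_ o _] := newP q; move: (valP x) => /=; rewrite -e o.
- by move=> [e]; have [_ o _] := newP p; move: (valP y) => /=; rewrite e o.
- case: p => [[a1 b1] hp]; case: q => [[a2 b2] hq] /= [ea]; subst b2.
  congr inr; apply: val_inj => /=; congr pair.
  case/and3P: hp => o1 _ /eqP e1; case/and3P: hq => o2 _ /eqP e2.
  by apply: (rk_inj irr1 tr1 tot1 o1 o2); exact: (etrans e1 (esym e2)).
Qed.

Lemma pr1_surj a : exists h, pr1 h = Some a.
Proof.
have [ha|ha] := boolP (is_output a); last by exists (inl (inl (exist _ a ha))).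
have hj : cO a < nn by apply: cO_lt.
case: (new_exists hj) => p hp; exists (inr p) => /=; congr Some.
have [o _ _] := newP p; exact: (rk_inj irr1 tr1 tot1 o ha hp).
Qed.

Lemma pr2_surj a : exists h, pr2 h = Some a.
Proof.
have [ha|ha] := boolP (is_input a); last by exists (inl (inr (exist _ a ha))).
have hj : cI a < nn by rewrite nInE; apply: rk_card.
case: (new_exists hj) => p hp; exists (inr p) => /=; congr Some.
have [_ i e] := newP p; apply: (rk_inj irr2 tr2 tot2 i ha); exact: etrans (esym e) hp.
Qed.

Lemma blk_mod e : blk e %% 3 = match e with inl (inl _) => 0 | inl (inr _) => 2 | inr _ => 1 end.
Proof.
case: e => [[x|x]|p].
- by rewrite blk_l; lia.
- by rewrite blk_r; have := cI_r x; lia.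
- by rewrite blk_n; lia.
Qed.

Lemma pr1_none h : (pr1 h == None) = (blk h %% 3 == 2).
Proof. by rewrite blk_mod; case: h => [[]|]. Qed.
Lemma pr2_none h : (pr2 h == None) = (blk h %% 3 == 0).
Proof. by rewrite blk_mod; case: h => [[]|]. Qed.


Lemma arrow_from_new (p : newE G1 G2) (h : EH) :
  arrow (inr p : EH) h -> exists a, h = inl (inr a).
Proof.
case/andP=> nh hc'.
have : (h = inr p \/ exists a, h = inl (inr a)).
  apply: (conn_ind (P := fun z : EH => z = inr p \/ exists a, z = inl (inr a))) hc'.
    by left.
  move=> y z Py; rewrite /erel /=.
  case: Py => [->|[a ->]]; case: z => [[x|x]|q] //= _; right; by exists x.
by case=> // e; rewrite e eqxx in nh.
Qed.

Lemma arrow_to_new (p : newE G1 G2) (h : EH) :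
  arrow h (inr p : EH) -> exists a, h = inl (inl a).
Proof.
case/andP=> nh hc'.
have : (h = inr p \/ exists a, h = inl (inl a)).
  apply: (conn_ind_rev (P := fun z : EH => z = inr p \/ exists a, z = inl (inl a))) hc'.
    by left.
  move=> y z Pz; rewrite /erel /=.
  case: Pz => [->|[a ->]]; case: y => [[x|x]|q] //= _; right; by exists x.
by case=> // e; rewrite e eqxx in nh.
Qed.

Lemma lift2 (p : newE G1 G2) (a : {e : pE G2 | ~~ is_input e}) :
  arrow (val p).2 (val a) -> arrow (inr p : EH) (inl (inr a)).
Proof.
case/andP=> _ hcn; rewrite /arrow /=.
pose P := fun z : pE G2 => z = (val p).2 \/
  exists2 a' : {e : pE G2 | ~~ is_input e}, val a' = z & connect (@erel H) (inr p) (inl (inr a')).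
have : P (val a).
  apply: (conn_ind (P := P)) hcn; first by left.
  move=> y z Py eyz.
  have hz := erel_ninput eyz.
  right; exists (exist _ z hz) => //.
  case: Py => [ey|[a' ea' ca']].
    apply: connect1; rewrite /erel /=; apply/eqP; congr inr; apply: val_inj => /=.
    by rewrite -ey; apply/eqP.
  apply: connect_trans ca' (connect1 _); rewrite /erel /=; apply/eqP; congr inr.
  by apply: val_inj => /=; rewrite ea'; apply/eqP.
case=> [e|[a' /val_inj -> //]].
have [_ i _] := newP p; move: (valP a); by rewrite /= e i.
Qed.

Lemma lift1 (p : newE G1 G2) (a : {e : pE G1 | ~~ is_output e}) :
  arrow (val a) (val p).1 -> arrow (inl (inl a) : EH) (inr p).
Proof.
case/andP=> _ hcn; rewrite /arrow /=.
pose P := fun z : pE G1 => z = (val p).1 \/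
  exists2 a' : {e : pE G1 | ~~ is_output e}, val a' = z & connect (@erel H) (inl (inl a')) (inr p).
have : P (val a).
  apply: (conn_ind_rev (P := P)) hcn; first by left.
  move=> y z Pz eyz.
  have hy := erel_noutput eyz.
  right; exists (exist _ y hy) => //.
  case: Pz => [ez|[a' ea' ca']].
    apply: connect1; rewrite /erel /=; apply/eqP; congr inl; apply: val_inj => /=.
    by rewrite -ez; apply/eqP.
  apply: connect_trans (connect1 _) ca'; rewrite /erel /=; apply/eqP; congr inl.
  by apply: val_inj => /=; rewrite ea'; apply/eqP.
case=> [e|[a' /val_inj -> //]].
have [o _ _] := newP p; move: (valP a); by rewrite /= e o.
Qed.

Lemma comp_lt_blk a b : comp_lt a b -> blk a <= blk b.
Proof. by rewrite comp_ltE => /orP[/ltnW//|/andP[/eqP->]]. Qed.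

Lemma blk_comp_lt a b : blk a < blk b -> comp_lt a b.
Proof. by rewrite comp_ltE => ->. Qed.

Lemma cwithin_new (x : EH) (p : newE G1 G2) : cwithin x (inr p) = false.
Proof. by case: x => [[]|]. Qed.
Lemma cwithin_new' (x : EH) (p : newE G1 G2) : cwithin (inr p) x = false.
Proof. by case: x => [[]|]. Qed.

Lemma blk3 e j : blk e = 3 * j -> exists2 a, e = inl (inl a) & cO (val a) = j.
Proof.
case: e => [[a|a]|p] h.
- by exists a => //; move: h; rewrite blk_l; lia.
- by move: h; rewrite blk_r; have := cI_r a; lia.
- by move: h; rewrite blk_n; lia.
Qed.

Lemma blk31 e j : blk e = 3 * j + 1 -> exists2 p, e = inr p & cO (val p).1 = j.
Proof.
case: e => [[a|a]|p] h.
- by move: h; rewrite blk_l; lia.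
- by move: h; rewrite blk_r; have := cI_r a; lia.
- by exists p => //; move: h; rewrite blk_n; lia.
Qed.

Lemma blk32 e j : blk e = 3 * j + 2 -> exists2 a, e = inl (inr a) & cI (val a) = j.+1.
Proof.
case: e => [[a|a]|p] h.
- by move: h; rewrite blk_l; lia.
- by exists a => //; move: h; rewrite blk_r; have := cI_r a; lia.
- by move: h; rewrite blk_n; lia.
Qed.

Definition qq j := #|[set x : pE G1 | ~~ is_output x & cO x == j]|.
Definition CU j (e : EH) := #|[set x : EH | (3 * j <= blk x) && comp_lt x e]|.
Definition pp j := #|[set x : pE G2 | ~~ is_input x & cI x == j.+1]|.
Definition CD j (e : EH) := #|[set x : EH | (blk x <= 3 * j + 2) && comp_lt e x]|.

Lemma pr1_in_inj (A : {pred EH}) : {in A &, injective pr1} \/ True.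
Proof. by right. Qed.

Lemma Qs_card j : #|[set x : EH | blk x == 3 * j]| = qq j.
Proof.
apply: (card_via_eq (f := pr1)).
- move=> x y; rewrite !inE => /eqP/blk3[a -> _] _ e.
  by apply: (@pr1_inj _ _ (val a)) => //; rewrite -e.
- move=> x; rewrite inE => /eqP/blk3[a -> ha]; exists (val a) => //.
  by rewrite inE ha eqxx andbT; case: a {ha}.
- move=> y; rewrite inE => /andP[hy /eqP hj].
  by exists (inl (inl (exist _ y hy))) => //; rewrite inE blk_l hj.
Qed.

Lemma Ps_card j : #|[set x : EH | blk x == 3 * j + 2]| = pp j.
Proof.
apply: (card_via_eq (f := pr2)).
- move=> x y; rewrite !inE => /eqP/blk32[a -> _] _ e.
  by apply: (@pr2_inj _ _ (val a)) => //; rewrite -e.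
- move=> x; rewrite inE => /eqP/blk32[a -> ha]; exists (val a) => //.
  by rewrite inE ha eqxx andbT; case: a {ha}.
- move=> y; rewrite inE => /andP[hy /eqP hj].
  exists (inl (inr (exist _ y hy))) => //; rewrite inE blk_r /= hj.
  by apply/eqP; lia.
Qed.

Lemma CU_eq j e : blk e = 3 * j -> CU j e < qq j.
Proof.
move=> he; have [a ea ha] := blk3 he; subst e.
apply: (@leq_ltn_trans #|[set b : pE G1 | ~~ is_output b & (cO b == j) && lt1 b (val a)]|).
  apply: (card_via (f := pr1)).
  - move=> x y; rewrite !inE => /andP[hx /comp_lt_blk hx'] _ e.
    have /blk3[b eb _] : blk x = 3 * j by rewrite he in hx'; lia.
    subst x.
    by apply: (@pr1_inj _ _ (val b)) => //; rewrite -e.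
  - move=> x; rewrite inE => /andP[hx]; rewrite comp_ltE he.
    rewrite ltnNge hx /= => /andP[/eqP hb3 hw].
    have [b eb hb] := blk3 hb3; subst x; move: hw => /= hw.
    by exists (val b) => //; rewrite inE; apply/and3P; split => //; [exact: (valP b)|apply/eqP].
apply: (card_lt_strict (x := val a)).
- by move=> b; rewrite !inE => /andP[-> /andP[-> _]].
- by rewrite inE ha eqxx andbT; case: a {ha he}.
- by rewrite inE irr1 !andbF.
Qed.

Lemma CU_eq1 j e : blk e = 3 * j + 1 -> CU j e = qq j.
Proof.
move=> he; have [p ep _] := blk31 he; subst e.
rewrite /CU -Qs_card; apply: eq_card => x; rewrite !inE comp_ltE cwithin_new he.
by rewrite andbF orbF; apply/idP/idP; lia.
Qed.

Lemma CU_gt j e : 3 * j + 1 < blk e -> qq j < CU j e.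
Proof.
move=> he.
have hj : j < nn by have := blk_bound e; lia.
case: (blk_exists_new hj) => N hN.
rewrite -Qs_card; apply: (card_lt_strict (x := N)).
- move=> x; rewrite !inE => /eqP hx; rewrite hx leqnn /=; apply: blk_comp_lt; lia.
- by rewrite inE hN leq_addr /=; apply: blk_comp_lt; lia.
- by rewrite inE hN; apply/eqP; lia.
Qed.

Lemma CD_eq j e : blk e = 3 * j + 2 -> CD j e < pp j.
Proof.
move=> he; have [a ea ha] := blk32 he; subst e.
apply: (@leq_ltn_trans #|[set b : pE G2 | ~~ is_input b & (cI b == j.+1) && lt2 (val a) b]|).
  apply: (card_via (f := pr2)).
  - move=> x y; rewrite !inE => /andP[hx /comp_lt_blk hx'] _ e.
    have /blk32[b eb _] : blk x = 3 * j + 2 by rewrite he in hx'; lia.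
    subst x.
    by apply: (@pr2_inj _ _ (val b)) => //; rewrite -e.
  - move=> x; rewrite inE => /andP[hx]; rewrite comp_ltE he.
    rewrite ltnNge hx /= eq_sym => /andP[/eqP hb3 hw].
    have [b eb hb] := blk32 hb3; subst x; move: hw => /= hw.
    by exists (val b) => //; rewrite inE; apply/and3P; split => //; [exact: (valP b)|apply/eqP].
apply: (card_lt_strict (x := val a)).
- by move=> b; rewrite !inE => /andP[-> /andP[-> _]].
- by rewrite inE ha eqxx andbT; case: a {ha he}.
- by rewrite inE irr2 !andbF.
Qed.

Lemma CD_eq1 j e : blk e = 3 * j + 1 -> CD j e = pp j.
Proof.
move=> he; have [p ep _] := blk31 he; subst e.
rewrite /CD -Ps_card; apply: eq_card => x; rewrite !inE comp_ltE cwithin_new' he.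
by rewrite andbF orbF; apply/idP/idP; lia.
Qed.

Lemma CD_lt j e : j < nn -> blk e < 3 * j + 1 -> pp j < CD j e.
Proof.
move=> hj he.
case: (blk_exists_new hj) => N hN.
rewrite -Ps_card; apply: (card_lt_strict (x := N)).
- move=> x; rewrite !inE => /eqP hx; rewrite hx leqnn /=; apply: blk_comp_lt; lia.
- by rewrite inE hN; apply/andP; split; [lia| apply: blk_comp_lt; lia].
- by rewrite inE hN; apply/eqP; lia.
Qed.

Lemma arrowN2 j (p : newE G1 G2) (b : {e : pE G2 | ~~ is_input e}) :
  cO (val p).1 = j -> cI (val b) = j.+1 -> arrow (inr p : EH) (inl (inr b)).
Proof.
move=> hp hb; apply: lift2.
have [_ i e] := newP p.
apply: input_arrow => //; first exact: (valP b).
by rewrite -/(cI _) -/(cI _) -e hp hb.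
Qed.

Lemma arrowN1 j (p : newE G1 G2) (a : {e : pE G1 | ~~ is_output e}) :
  cO (val p).1 = j -> cO (val a) = j -> arrow (inl (inl a) : EH) (inr p).
Proof.
move=> hp ha; apply: lift1.
have [o _ _] := newP p.
apply: output_arrow => //; first exact: (valP a).
by rewrite -/(cO _) -/(cO _) hp ha.
Qed.

Lemma CP j (e : EH) : 3 * j + 2 <= blk e ->
  (blk e == 3 * j + 2) = [exists N : EH, (blk N == 3 * j + 1) && arrow N e &&
      [forall x : EH, (comp_lt x e && (3 * j + 2 <= blk x)) ==> arrow N x]].
Proof.
move=> he; apply/idP/idP.
  move/eqP=> he2; have [a ea ha] := blk32 he2; subst e.
  have hj : j < nn by have := cI_le (val a); lia.
  case: (new_exists hj) => p hp.
  apply/existsP; exists (inr p); rewrite blk_n hp eqxx /=.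
  rewrite (arrowN2 hp ha) /=; apply/forallP=> x; apply/implyP=> /andP[/comp_lt_blk h1 h2].
  have : blk x = 3 * j + 2 by rewrite he2 in h1; lia.
  by case/blk32=> b -> hb; apply: (arrowN2 hp hb).
case/existsP=> N /andP[/andP[/eqP hN aNe] /forallP hall].
have [p eN hp] := blk31 hN; subst N.
have [a ea] := arrow_from_new aNe; subst e.
move: he; rewrite blk_r => he.
have ha := cI_r a.
case: (ltngtP (cI (val a)) j.+1) => [h|h|h]; first by lia.
- have hj : j.+1 < nn by have := cI_le (val a); lia.
  case: (new_exists hj) => p' hp'.
  have hlt : comp_lt (inr p' : EH) (inl (inr a)).
    by apply: blk_comp_lt; rewrite blk_n blk_r hp'; lia.
  have := hall (inr p'); rewrite hlt blk_n hp' /=.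
  rewrite (_ : 3 * j + 2 <= 3 * j.+1 + 1); last by lia.
  by move/implyP/(_ isT)/arrow_from_new=> [].
- by rewrite h; apply/eqP; lia.
Qed.

Lemma CQ' j (e : EH) : blk e <= 3 * j ->
  (blk e == 3 * j) = [exists N : EH, (blk N == 3 * j + 1) && arrow e N &&
      [forall x : EH, (comp_lt e x && (blk x <= 3 * j)) ==> arrow x N]].
Proof.
move=> he; apply/idP/idP.
  move/eqP=> he2; have [a ea ha] := blk3 he2; subst e.
  have hj : j < nn by rewrite -ha; apply: cO_lt.
  case: (new_exists hj) => p hp.
  apply/existsP; exists (inr p); rewrite blk_n hp eqxx /=.
  rewrite (arrowN1 hp ha) /=; apply/forallP=> x; apply/implyP=> /andP[/comp_lt_blk h1 h2].
  have : blk x = 3 * j by rewrite he2 in h1; lia.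
  by case/blk3=> b -> hb; apply: (arrowN1 hp hb).
case/existsP=> N /andP[/andP[/eqP hN aNe] /forallP hall].
have [p eN hp] := blk31 hN; subst N.
have [a ea] := arrow_to_new aNe; subst e.
move: he; rewrite blk_l => he.
case: (ltngtP (cO (val a)) j) => [h|h|h]; last by rewrite h.
- have hj : cO (val a) < nn by apply: cO_lt.
  case: (new_exists hj) => p' hp'.
  have hlt : comp_lt (inl (inl a) : EH) (inr p').
    by apply: blk_comp_lt; rewrite blk_n blk_l hp'; lia.
  have := hall (inr p'); rewrite hlt blk_n hp' /=.
  rewrite (_ : 3 * cO (val a) + 1 <= 3 * j); last by lia.
  by move/implyP/(_ isT)/arrow_to_new=> [].
- by lia.
Qed.

Lemma cV_ll (u v : {v : pV G1 | ~~ is_sink v}) :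
  (inl u == inl v :> cV G1 G2) = (val u == val v).
Proof. by apply/eqP/eqP => [[->]|/val_inj->]. Qed.
Lemma cV_rr (u v : {v : pV G2 | ~~ is_source v}) :
  (inr u == inr v :> cV G1 G2) = (val u == val v).
Proof. by apply/eqP/eqP => [[->]|/val_inj->]. Qed.
Lemma cV_lr u v : (inl u == inr v :> cV G1 G2) = false. Proof. by []. Qed.
Lemma cV_rl u v : (inr u == inl v :> cV G1 G2) = false. Proof. by []. Qed.


Lemma R2lt ha hb a b : pr2 ha = Some a -> pr2 hb = Some b -> lt2 a b = comp_lt ha hb.
Proof.
case: ha => [[x|x]|p] //= [<-]; case: hb => [[y|y]|q] //= [<-]; rewrite comp_ltE.
- rewrite !blk_r (rk_lt_split tr2 tot2 (@is_input G2)) -/(cI _) -/(cI _).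
  move: (cI_r x) (cI_r y) => /= hx hy; rewrite /=.
  congr orb; [by apply/idP/idP; slia | congr andb; apply/eqP/eqP; slia].
- rewrite cwithin_new andbF orbF blk_r blk_n.
  have [_ i e] := newP q; move: (cI_r x) => /= hx; rewrite /=.
  rewrite (rkS_le irr2 tr2 tot2 (S:=@is_input G2)) //; last first.
    by apply/eqP=> ex; move: (valP x); rewrite /= ex i.
  rewrite -/(cI _) -/(cI _) -e. apply/idP/idP; slia.
- rewrite cwithin_new' andbF orbF blk_r blk_n.
  have [_ i e] := newP p; move: (cI_r y) => /= hy; rewrite /=.
  rewrite (rkS_lt irr2 tr2 tot2 (S:=@is_input G2)) //.
  rewrite -/(cI _) -/(cI _) -e; apply/idP/idP; slia.
- rewrite cwithin_new andbF orbF !blk_n.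
  have [_ i e] := newP p; have [_ i' e'] := newP q.
  rewrite (rkS_lt irr2 tr2 tot2 (S:=@is_input G2)) //.
  rewrite -/(cI _) -/(cI _) -e -e'; apply/idP/idP; slia.
Qed.

Lemma R1lt ha hb a b : pr1 ha = Some a -> pr1 hb = Some b -> lt1 a b = comp_lt ha hb.
Proof.
case: ha => [[x|x]|p] //= [<-]; case: hb => [[y|y]|q] //= [<-]; rewrite comp_ltE.
- rewrite !blk_l (rk_lt_split tr1 tot1 (@is_output G1)) -/(cO _) -/(cO _).
  congr orb; [by apply/idP/idP; slia | congr andb; apply/eqP/eqP; slia].
- rewrite cwithin_new andbF orbF blk_l blk_n.
  have [o _ _] := newP q.
  rewrite (rkS_le irr1 tr1 tot1 (S:=@is_output G1)) //; last first.
    by apply/eqP=> ex; move: (valP x); rewrite /= ex o.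
  rewrite -/(cO _) -/(cO _); apply/idP/idP; slia.
- rewrite cwithin_new' andbF orbF blk_l blk_n.
  have [o _ _] := newP p.
  rewrite (rkS_lt irr1 tr1 tot1 (S:=@is_output G1)) //.
  rewrite -/(cO _) -/(cO _); apply/idP/idP; slia.
- rewrite cwithin_new andbF orbF !blk_n.
  have [o _ _] := newP p.
  rewrite (rkS_lt irr1 tr1 tot1 (S:=@is_output G1)) //.
  rewrite -/(cO _) -/(cO _); apply/idP/idP; slia.
Qed.

Lemma R2in h a : pr2 h = Some a -> is_input a = (blk h %% 3 == 1).
Proof.
rewrite blk_mod; case: h => [[x|x]|p] //= [<-] /=.
  by apply/negbTE; case: x.
by have [_ -> _] := newP p.
Qed.

Lemma R1out h a : pr1 h = Some a -> is_output a = (blk h %% 3 == 1).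
Proof.
rewrite blk_mod; case: h => [[x|x]|p] //= [<-] /=.
  by apply/negbTE; case: x.
by have [-> _ _] := newP p.
Qed.

Lemma R2tt ha hb a b : pr2 ha = Some a -> pr2 hb = Some b ->
  (ptgt a == ptgt b) = (ctgt ha == ctgt hb).
Proof.
by case: ha => [[x|x]|p] //= [<-]; case: hb => [[y|y]|q] //= [<-]; rewrite cV_rr.
Qed.

Lemma R2st ha hb a b : pr2 ha = Some a -> pr2 hb = Some b ->
  (psrc a == ptgt b) = (csrc ha == ctgt hb).
Proof.
case: ha => [[x|x]|p] //= [<-]; case: hb => [[y|y]|q] //= [<-]; rewrite ?cV_rr //.
- by have [_ i _] := newP p; rewrite src_input_tgt.
- by have [_ i _] := newP p; rewrite src_input_tgt.
Qed.

Lemma R2ss ha hb a b : pr2 ha = Some a -> pr2 hb = Some b ->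
  (psrc a == psrc b) = (a == b) || [&& ~~ is_input a, ~~ is_input b & csrc ha == csrc hb].
Proof.
case: ha => [[x|x]|p] //= [<-]; case: hb => [[y|y]|q] //= [<-].
- rewrite cV_rr /= (valP x) (valP y) /=.
  by apply/idP/idP => [->|/orP[/eqP->|]]; rewrite ?orbT.
- by have [_ i _] := newP q; rewrite eq_sym src_input // i /= andbF orbF eq_sym.
- by have [_ i _] := newP p; rewrite src_input // i /= orbF.
- by have [_ i _] := newP p; rewrite src_input // i /= orbF.
Qed.

Lemma R1ss ha hb a b : pr1 ha = Some a -> pr1 hb = Some b ->
  (psrc a == psrc b) = (csrc ha == csrc hb).
Proof.
by case: ha => [[x|x]|p] //= [<-]; case: hb => [[y|y]|q] //= [<-]; rewrite cV_ll.
Qed.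

Lemma R1st ha hb a b : pr1 ha = Some a -> pr1 hb = Some b ->
  (psrc a == ptgt b) = (csrc ha == ctgt hb).
Proof.
case: ha => [[x|x]|p] //= [<-]; case: hb => [[y|y]|q] //= [<-]; rewrite ?cV_ll //.
- by have [o _ _] := newP q; rewrite tgt_output_src.
- by have [o _ _] := newP q; rewrite tgt_output_src.
Qed.

Lemma R1tt ha hb a b : pr1 ha = Some a -> pr1 hb = Some b ->
  (ptgt a == ptgt b) = (a == b) || [&& ~~ is_output a, ~~ is_output b & ctgt ha == ctgt hb].
Proof.
case: ha => [[x|x]|p] //= [<-]; case: hb => [[y|y]|q] //= [<-].
- rewrite cV_ll /= (valP x) (valP y) /=.
  by apply/idP/idP => [->|/orP[/eqP->|]]; rewrite ?orbT.
- by have [o _ _] := newP q; rewrite eq_sym tgt_output // o /= andbF orbF eq_sym.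
- by have [o _ _] := newP p; rewrite tgt_output // o /= orbF.
- by have [o _ _] := newP p; rewrite tgt_output // o /= orbF.
Qed.

Lemma CQ_char j e : 3 * j <= blk e -> (blk e == 3 * j) = (CU j e < qq j).
Proof.
move=> he; case: (ltngtP (blk e) (3 * j)) => h; first by lia.
  case: (ltngtP (blk e) (3 * j + 1)) => h'; first by lia.
    by apply/esym/negbTE; rewrite -leqNgt; apply: ltnW; apply: CU_gt.
  by rewrite (CU_eq1 h') ltnn.
by rewrite (CU_eq h).
Qed.

Lemma CN_char j e : 3 * j <= blk e -> (blk e == 3 * j + 1) = (CU j e == qq j).
Proof.
move=> he; case: (ltngtP (blk e) (3 * j + 1)) => h.
- have h' : blk e = 3 * j by lia.
  by have := CU_eq h'; rewrite ltn_neqAle => /andP[/negbTE ->].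
- by have := CU_gt h; rewrite ltn_neqAle eq_sym => /andP[/negbTE ->].
- by rewrite (CU_eq1 h) eqxx.
Qed.

Lemma CD_char j e : j < nn -> blk e <= 3 * j + 2 -> (blk e == 3 * j + 2) = (CD j e < pp j).
Proof.
move=> hj he; case: (ltngtP (blk e) (3 * j + 2)) => h; last first.
  by rewrite (CD_eq h).
  by lia.
case: (ltngtP (blk e) (3 * j + 1)) => h'.
- by apply/esym/negbTE; rewrite -leqNgt; apply: ltnW; apply: CD_lt.
- by lia.
- by rewrite (CD_eq1 h') ltnn.
Qed.

Lemma CD1_char j e : j < nn -> blk e <= 3 * j + 2 -> (blk e == 3 * j + 1) = (CD j e == pp j).
Proof.
move=> hj he; case: (ltngtP (blk e) (3 * j + 1)) => h.
- by have := CD_lt hj h; rewrite ltn_neqAle eq_sym => /andP[/negbTE ->].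
- have h' : blk e = 3 * j + 2 by lia.
  by have := CD_eq h'; rewrite ltn_neqAle => /andP[/negbTE ->].
- by rewrite (CD_eq1 h) eqxx.
Qed.

End Comp.

Lemma card_transport (T T' : finType) (f : T -> T') (P : pred T) (P' : pred T') :
  bijective f -> (forall x, P' (f x) = P x) ->
  #|[set x' | P' x']| = #|[set x | P x]|.
Proof.
move=> [g fg gf] hP.
have -> : [set x' | P' x'] = f @: [set x | P x].
  apply/setP=> x'; rewrite inE; apply/idP/imsetP => [h|[x]].
    by exists (g x'); [rewrite inE -hP gf | rewrite gf].
  by rewrite inE -hP => h ->.
by rewrite card_imset //; apply: can_inj fg.
Qed.

Lemma exists_transport (T T' : finType) (f : T -> T') (P : pred T) (P' : pred T') :
  bijective f -> (forall x, P' (f x) = P x) -> [exists x', P' x'] = [exists x, P x].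
Proof.
move=> [g fg gf] hP; apply/existsP/existsP => [[x' h]|[x h]].
  by exists (g x'); rewrite -hP gf.
by exists (f x); rewrite hP.
Qed.

Lemma forall_transport (T T' : finType) (f : T -> T') (P : pred T) (P' : pred T') :
  bijective f -> (forall x, P' (f x) = P x) -> [forall x', P' x'] = [forall x, P x].
Proof.
move=> [g fg gf] hP; apply/forallP/forallP => [h x|h x'].
  by rewrite -hP.
by rewrite -(gf x') hP.
Qed.

Section IsoGraph.
Variables (G G' : pgraph) (fV : pV G -> pV G') (fE : pE G -> pE G').
Hypotheses (bV : bijective fV) (bE : bijective fE)
  (hs : forall e, fV (psrc e) = psrc (fE e)) (ht : forall e, fV (ptgt e) = ptgt (fE e)).

Lemma iso_erel (a b : pE G) : erel (fE a) (fE b) = erel a b.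
Proof. by rewrite /erel -hs -ht (bij_eq bV). Qed.

Lemma iso_connect (a b : pE G) : connect (@erel G') (fE a) (fE b) = connect (@erel G) a b.
Proof.
case: bE => g fg gf.
apply/idP/idP.
  move=> h.
  have key : forall y, connect (@erel G') (fE a) y -> connect (@erel G) a (g y).
    apply: (conn_ind (P := fun y => connect (@erel G) a (g y))); first by rewrite fg connect0.
    move=> y z hy eyz; apply: connect_trans hy (connect1 _); by rewrite -iso_erel !gf.
  by have := key _ h; rewrite fg.
apply: (conn_ind (P := fun z => connect (@erel G') (fE a) (fE z))); first exact: connect0.
by move=> y z hy eyz; apply: connect_trans hy (connect1 _); rewrite iso_erel.
Qed.

Lemma iso_arrow (a b : pE G) : arrow (fE a) (fE b) = arrow a b.
Proof. by rewrite /arrow iso_connect (bij_eq bE). Qed.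

Lemma iso_deg v : deg (fV v) = deg v.
Proof.
rewrite /deg; congr addn; apply: card_transport bE _ => e.
  by rewrite -hs (bij_eq bV).
by rewrite -ht (bij_eq bV).
Qed.

Lemma iso_input (e : pE G) : is_input (fE e) = is_input e.
Proof. by rewrite /is_input /boundary -hs iso_deg. Qed.
Lemma iso_output (e : pE G) : is_output (fE e) = is_output e.
Proof. by rewrite /is_output /boundary -ht iso_deg. Qed.

End IsoGraph.

Lemma proj_half (TH TH' U U' : finType) (pr : TH -> option U) (pr' : TH' -> option U')
  (f : TH -> TH') :
  (forall h h' a, pr h = Some a -> pr h' = Some a -> h = h') ->
  (forall a, exists h, pr h = Some a) ->
  (forall h, (pr' (f h) == None) = (pr h == None)) ->
  exists g : U -> U', forall h a, pr h = Some a -> pr' (f h) = Some (g a).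
Proof.
move=> inj sur hN.
have ex : forall a, exists a', [exists h, (pr h == Some a) && (pr' (f h) == Some a')].
  move=> a; case: (sur a) => h ha.
  case e : (pr' (f h)) => [a'|].
    by exists a'; apply/existsP; exists h; rewrite ha e !eqxx.
  by move: (hN h); rewrite e ha.
exists (fun a => xchoose (ex a)) => h a ha.
have /existsP[h0 /andP[/eqP h0a /eqP h0b]] := xchooseP (ex a).
by rewrite -(inj _ _ _ h0a ha).
Qed.

Lemma proj_map (TH TH' U U' : finType) (pr : TH -> option U) (pr' : TH' -> option U')
  (f : TH -> TH') :
  bijective f ->
  (forall h h' a, pr h = Some a -> pr h' = Some a -> h = h') ->
  (forall h h' a, pr' h = Some a -> pr' h' = Some a -> h = h') ->
  (forall a, exists h, pr h = Some a) -> (forall a, exists h, pr' h = Some a) ->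
  (forall h, (pr' (f h) == None) = (pr h == None)) ->
  exists g : U -> U', bijective g /\ forall h a, pr h = Some a -> pr' (f h) = Some (g a).
Proof.
move=> [fi ffi fif] inj inj' sur sur' hN.
have [g hg] := proj_half inj sur hN.
have hN' : forall h, (pr (fi h) == None) = (pr' h == None) by move=> h; rewrite -{2}(fif h) hN.
have [gi hgi] := proj_half inj' sur' hN'.
exists g; split => //; exists gi.
  move=> a; case: (sur a) => h ha.
  have := hgi _ _ (hg _ _ ha); rewrite ffi ha; by case.
move=> a; case: (sur' a) => h ha.
have := hg _ _ (hgi _ _ ha); rewrite fif ha; by case.
Qed.

Section EdgeIso.
Variables (G G' : pgraph).

Lemma vmap_half (g : pE G -> pE G') :
  (forall v : pV G, exists e, (psrc e == v) || (ptgt e == v)) ->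
  (forall a b, (psrc (g a) == psrc (g b)) = (psrc a == psrc b)) ->
  (forall a b, (ptgt (g a) == ptgt (g b)) = (ptgt a == ptgt b)) ->
  (forall a b, (psrc (g a) == ptgt (g b)) = (psrc a == ptgt b)) ->
  exists fV : pV G -> pV G', (forall e, fV (psrc e) = psrc (g e)) /\
                               (forall e, fV (ptgt e) = ptgt (g e)).
Proof.
move=> cov hss htt hst.
pose P v v' := [forall e, ((psrc e == v) == (psrc (g e) == v')) &&
                           ((ptgt e == v) == (ptgt (g e) == v'))].
have ex : forall v, exists v', P v v'.
  move=> v; case: (cov v) => e0 /orP[/eqP<-|/eqP<-].
    exists (psrc (g e0)); apply/forallP=> e; rewrite hss.
    by rewrite (eq_sym (ptgt e)) (eq_sym (ptgt (g e))) hst !eqxx.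
  exists (ptgt (g e0)); apply/forallP=> e; rewrite htt hst.
  by rewrite !eqxx.
exists (fun v => xchoose (ex v)); split => e.
  have /forallP/(_ e)/andP[/eqP + _] := xchooseP (ex (psrc e)).
  by rewrite eqxx => /esym/eqP.
have /forallP/(_ e)/andP[_ /eqP] := xchooseP (ex (ptgt e)).
by rewrite eqxx => /esym/eqP.
Qed.

End EdgeIso.

Section EdgeIso2.
Variables (G G' : pgraph).

Lemma iso_of_edges (lt : rel (pE G)) (lt' : rel (pE G')) (g : pE G -> pE G') :
  bijective g ->
  (forall v : pV G, exists e, (psrc e == v) || (ptgt e == v)) ->
  (forall v : pV G', exists e, (psrc e == v) || (ptgt e == v)) ->
  (forall a b, (psrc (g a) == psrc (g b)) = (psrc a == psrc b)) ->
  (forall a b, (ptgt (g a) == ptgt (g b)) = (ptgt a == ptgt b)) ->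
  (forall a b, (psrc (g a) == ptgt (g b)) = (psrc a == ptgt b)) ->
  (forall a b, lt' (g a) (g b) = lt a b) -> ord_iso lt lt'.
Proof.
move=> bg cov cov' hss htt hst hlt.
have [fV [fs ft]] := vmap_half cov hss htt hst.
case: (bg) => gi ggi gig.
have hss' : forall a b, (psrc (gi a) == psrc (gi b)) = (psrc a == psrc b).
  by move=> a b; rewrite -hss !gig.
have htt' : forall a b, (ptgt (gi a) == ptgt (gi b)) = (ptgt a == ptgt b).
  by move=> a b; rewrite -htt !gig.
have hst' : forall a b, (psrc (gi a) == ptgt (gi b)) = (psrc a == ptgt b).
  by move=> a b; rewrite -hst !gig.
have [fVi [fsi fti]] := vmap_half cov' hss' htt' hst'.
exists fV, g; split => //.
exists fVi.
  move=> v; case: (cov v) => e /orP[]/eqP<-; by rewrite ?fs ?fsi ?ft ?fti ggi.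
move=> v; case: (cov' v) => e /orP[]/eqP<-.
  by rewrite fsi fs gig.
by rewrite fti ft gig.
Qed.

End EdgeIso2.

Section PopIso.
Variables (G G' : popgraph) (fV : pV G -> pV G') (fE : pE G -> pE G').
Hypotheses (bV : bijective fV) (bE : bijective fE)
  (hs : forall e, fV (psrc e) = psrc (fE e)) (ht : forall e, fV (ptgt e) = ptgt (fE e))
  (hl : forall e e', plt (fE e) (fE e') = plt e e').

Lemma iso_cO e : cO (fE e) = cO e.
Proof.
apply: card_transport bE _ => x.
by rewrite (iso_output bV bE hs ht) hl.
Qed.

Lemma iso_cI e : cI (fE e) = cI e.
Proof.
apply: card_transport bE _ => x.
by rewrite (iso_input bV bE hs ht) hl.
Qed.

Lemma iso_qq j : qq G' j = qq G j.
Proof.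
apply: card_transport bE _ => x.
by rewrite (iso_output bV bE hs ht) iso_cO.
Qed.

Lemma iso_pp j : pp G' j = pp G j.
Proof.
apply: card_transport bE _ => x.
by rewrite (iso_input bV bE hs ht) iso_cI.
Qed.

Lemma iso_nn : nn G' = nn G.
Proof. by apply: card_transport bE _ => x; rewrite (iso_output bV bE hs ht). Qed.

Lemma iso_nIn : #|[set s | @is_input G' s]| = #|[set s | @is_input G s]|.
Proof. by apply: card_transport bE _ => x; rewrite (iso_input bV bE hs ht). Qed.

End PopIso.

Local Opaque blk.

Section Main.
Variables (G1 G2 G1' G2' : popgraph).
Hypotheses (hc : composable G1 G2) (hc' : composable G1' G2').
Variables (fV : pV (comp_graph G1 G2) -> pV (comp_graph G1' G2'))
  (fE : pE (comp_graph G1 G2) -> pE (comp_graph G1' G2')).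
Hypotheses (bV : bijective fV) (bE : bijective fE)
  (hs : forall e, fV (psrc e) = psrc (fE e)) (ht : forall e, fV (ptgt e) = ptgt (fE e))
  (hl : forall e e', comp_lt (fE e) (fE e') = comp_lt e e').
Hypothesis hnn : nn G1' = nn G1.

Lemma CU_tr j e : (forall x, (3 * j <= blk (fE x)) = (3 * j <= blk x)) ->
  CU j (fE e) = CU j e.
Proof. by move=> h; apply: card_transport bE _ => x; rewrite h hl. Qed.

Lemma CD_tr j e : (forall x, (blk (fE x) <= 3 * j + 2) = (blk x <= 3 * j + 2)) ->
  CD j (fE e) = CD j e.
Proof. by move=> h; apply: card_transport bE _ => x; rewrite h hl. Qed.

Lemma mod3 k : exists j, [\/ k = 3 * j, k = 3 * j + 1 | k = 3 * j + 2].
Proof.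
exists (k %/ 3).
have : k %% 3 < 3 := ltn_pmod k (isT : 0 < 3).
move: (divn_eq k 3); case: (k %% 3) => [|[|[|r]]] // ek _;
  [constructor 1 | constructor 2 | constructor 3]; lia.
Qed.

Lemma blk_pres1 : (forall j, qq G1' j = qq G1 j) -> forall e, blk (fE e) = blk e.
Proof.
move=> hq.
suff key : forall k e, (blk (fE e) == k) = (blk e == k).
  by move=> e; apply/eqP; rewrite key.
elim/ltn_ind=> k IH.
have Hlt : forall m, m <= k -> forall e, (blk (fE e) < m) = (blk e < m).
  move=> m hm e; apply/idP/idP => h.
    by have := IH _ (leq_trans h hm) e; rewrite (eqxx (blk (fE e))) => /esym/eqP ->.
  by have := IH _ (leq_trans h hm) e; rewrite (eqxx (blk e)) => /eqP ->.
have Hge : forall m, m <= k -> forall e, (m <= blk (fE e)) = (m <= blk e).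
  by move=> m hm e; rewrite leqNgt (leqNgt m) Hlt.
move=> e.
case: (mod3 k) => j [] ek; subst k.
- case: (leqP (3 * j) (blk e)) => h.
    rewrite CQ_char // ?Hge // CQ_char // CU_tr ?hq //.
    by move=> x; rewrite Hge.
  have h'' : blk (fE e) < 3 * j by rewrite Hlt.
  by rewrite !ltn_eqF.
- have h3 : 3 * j <= 3 * j + 1 by lia.
  case: (leqP (3 * j) (blk e)) => h.
    rewrite CN_char // ?Hge // CN_char // CU_tr ?hq //.
    by move=> x; rewrite Hge.
  have h' : blk e < 3 * j + 1 by lia.
  have h'' : blk (fE e) < 3 * j + 1 by rewrite Hlt.
  by rewrite !ltn_eqF.
- case: (leqP (3 * j + 2) (blk e)) => h.
    rewrite CP // ?Hge // CP //.
    apply: exists_transport bE _ => N.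
    rewrite (iso_arrow bV bE hs ht).
    have hN : (blk (fE N) == 3 * j + 1) = (blk N == 3 * j + 1) by apply: IH; lia.
    rewrite hN; congr andb.
    apply: forall_transport bE _ => x.
    by rewrite hl Hge // (iso_arrow bV bE hs ht).
  have h'' : blk (fE e) < 3 * j + 2 by rewrite Hlt.
  by rewrite !ltn_eqF.
Qed.

Lemma blk_pres2 : (forall j, pp G2' j = pp G2 j) -> forall e, blk (fE e) = blk e.
Proof.
move=> hp.
suff key : forall d k, 3 * nn G1 - k = d -> forall e, (blk (fE e) == k) = (blk e == k).
  by move=> e; apply/eqP; rewrite (key _ _ erefl).
elim/ltn_ind=> d IH k ed e.
case: (leqP (3 * nn G1) k) => hk.
  have h1 := blk_bound hc e; have h2 := blk_bound hc' (fE e).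
  rewrite hnn in h2.
  have h3 : blk (fE e) < k by lia.
  have h4 : blk e < k by lia.
  by rewrite !ltn_eqF.
have IH' : forall k', k < k' -> forall e, (blk (fE e) == k') = (blk e == k').
  move=> k' hk'; apply: (IH (3 * nn G1 - k')) => //; lia.
have Hgt : forall m, k <= m -> forall e, (m < blk (fE e)) = (m < blk e).
  move=> m hm e'; apply/idP/idP => h.
    by have := IH' _ (leq_ltn_trans hm h) e'; rewrite (eqxx (blk (fE e'))) => /esym/eqP ->.
  by have := IH' _ (leq_ltn_trans hm h) e'; rewrite (eqxx (blk e')) => /eqP ->.
have Hle : forall m, k <= m -> forall e, (blk (fE e) <= m) = (blk e <= m).
  by move=> m hm e'; rewrite leqNgt (leqNgt (blk e')) Hgt.
case: (mod3 k) => j [] ek; subst k.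
- case: (leqP (blk e) (3 * j)) => h.
    rewrite CQ' // ?Hle // CQ' //.
    apply: exists_transport bE _ => N.
    rewrite (iso_arrow bV bE hs ht).
    have hN : (blk (fE N) == 3 * j + 1) = (blk N == 3 * j + 1) by apply: IH'; lia.
    rewrite hN; congr andb.
    apply: forall_transport bE _ => x.
    by rewrite hl Hle // (iso_arrow bV bE hs ht).
  have h'' : 3 * j < blk (fE e) by rewrite Hgt.
  by rewrite !gtn_eqF.
- have hj : j < nn G1 by lia.
  have hj' : j < nn G1' by rewrite hnn.
  have hk2 : 3 * j + 1 <= 3 * j + 2 by lia.
  case: (leqP (blk e) (3 * j + 2)) => h.
    have hfe : blk (fE e) <= 3 * j + 2 by rewrite Hle.
    rewrite (CD1_char hc hj h) (CD1_char hc' hj' hfe) CD_tr ?hp //.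
    by move=> x; rewrite Hle.
  have h'' : 3 * j + 2 < blk (fE e) by rewrite Hgt.
  have h3 : 3 * j + 1 < blk (fE e) by lia.
  have h4 : 3 * j + 1 < blk e by lia.
  by rewrite !gtn_eqF.
- have hj : j < nn G1 by lia.
  have hj' : j < nn G1' by rewrite hnn.
  case: (leqP (blk e) (3 * j + 2)) => h.
    rewrite CD_char // ?Hle // CD_char // CD_tr ?hp //.
    by move=> x; rewrite Hle.
  have h'' : 3 * j + 2 < blk (fE e) by rewrite Hgt.
  by rewrite !gtn_eqF.
Qed.

End Main.

Section Build.
Variables (G1 G2 G1' G2' : popgraph).
Hypotheses (hc : composable G1 G2) (hc' : composable G1' G2').
Variables (fV : pV (comp_graph G1 G2) -> pV (comp_graph G1' G2'))
  (fE : pE (comp_graph G1 G2) -> pE (comp_graph G1' G2')).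
Hypotheses (bV : bijective fV) (bE : bijective fE)
  (hs : forall e, fV (psrc e) = psrc (fE e)) (ht : forall e, fV (ptgt e) = ptgt (fE e))
  (hl : forall e e', comp_lt (fE e) (fE e') = comp_lt e e').
Hypothesis hb : forall e, blk (fE e) = blk e.

Let hs' : forall h, csrc (fE h) = fV (csrc h) := fun h => esym (hs h).
Let ht' : forall h, ctgt (fE h) = fV (ctgt h) := fun h => esym (ht h).

Lemma build2 : pop_eq G2 G2'.
Proof.
have hN : forall h, (pr2 (fE h) == None) = (pr2 h == None) by move=> h; rewrite !pr2_none hb.
have [g [bg hg]] := proj_map bE (@pr2_inj G1 G2) (@pr2_inj G1' G2') (pr2_surj hc) (pr2_surj hc') hN.
apply: (iso_of_edges bg (@vertex_incident G2) (@vertex_incident G2')).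
- move=> a b; case: (pr2_surj hc a) => ha ea; case: (pr2_surj hc b) => hb' eb.
  rewrite (R2ss (hg _ _ ea) (hg _ _ eb)) (R2ss ea eb) (bij_eq bg).
  rewrite (R2in (hg _ _ ea)) (R2in (hg _ _ eb)) !hb -(R2in ea) -(R2in eb).
  by rewrite !hs' (bij_eq bV).
- move=> a b; case: (pr2_surj hc a) => ha ea; case: (pr2_surj hc b) => hb' eb.
  by rewrite (R2tt (hg _ _ ea) (hg _ _ eb)) (R2tt ea eb) !ht' (bij_eq bV).
- move=> a b; case: (pr2_surj hc a) => ha ea; case: (pr2_surj hc b) => hb' eb.
  by rewrite (R2st (hg _ _ ea) (hg _ _ eb)) (R2st ea eb) hs' ht' (bij_eq bV).
- move=> a b; case: (pr2_surj hc a) => ha ea; case: (pr2_surj hc b) => hb' eb.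
  by rewrite (R2lt (hg _ _ ea) (hg _ _ eb)) hl -(R2lt ea eb).
Qed.

Lemma build1 : pop_eq G1 G1'.
Proof.
have hN : forall h, (pr1 (fE h) == None) = (pr1 h == None) by move=> h; rewrite !pr1_none hb.
have [g [bg hg]] := proj_map bE (@pr1_inj G1 G2) (@pr1_inj G1' G2') (pr1_surj hc) (pr1_surj hc') hN.
apply: (iso_of_edges bg (@vertex_incident G1) (@vertex_incident G1')).
- move=> a b; case: (pr1_surj hc a) => ha ea; case: (pr1_surj hc b) => hb' eb.
  by rewrite (R1ss (hg _ _ ea) (hg _ _ eb)) (R1ss ea eb) !hs' (bij_eq bV).
- move=> a b; case: (pr1_surj hc a) => ha ea; case: (pr1_surj hc b) => hb' eb.
  rewrite (R1tt (hg _ _ ea) (hg _ _ eb)) (R1tt ea eb) (bij_eq bg).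
  rewrite (R1out (hg _ _ ea)) (R1out (hg _ _ eb)) !hb -(R1out ea) -(R1out eb).
  by rewrite !ht' (bij_eq bV).
- move=> a b; case: (pr1_surj hc a) => ha ea; case: (pr1_surj hc b) => hb' eb.
  by rewrite (R1st (hg _ _ ea) (hg _ _ eb)) (R1st ea eb) hs' ht' (bij_eq bV).
- move=> a b; case: (pr1_surj hc a) => ha ea; case: (pr1_surj hc b) => hb' eb.
  by rewrite (R1lt (hg _ _ ea) (hg _ _ eb)) hl -(R1lt ea eb).
Qed.

End Build.

Unset Implicit Arguments.

Theorem proposition2p3 (G1 G2 G1' G2' : popgraph) :
  composable G1 G2 -> composable G1' G2' ->
  ord_iso (@comp_lt G1 G2) (@comp_lt G1' G2') ->
  (pop_eq G1 G1' -> pop_eq G2 G2') /\ (pop_eq G2 G2' -> pop_eq G1 G1').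
Proof.
move=> hc hc' [fV [fE [bV bE hs ht hl]]]; split.
  case=> gV [gE [bgV bgE gs gt gl]].
  have hnn := iso_nn bgV bgE gs gt.
  have hq := iso_qq bgV bgE gs gt gl.
  have hb := blk_pres1 hc hc' bV bE hs ht hl hnn hq.
  exact: (build2 hc hc' bV bE hs ht hl hb).
case=> gV [gE [bgV bgE gs gt gl]].
have hnn : nn G1' = nn G1.
  by rewrite (nInE hc) (nInE hc'); apply: (iso_nIn bgV bgE gs gt).
have hp := iso_pp bgV bgE gs gt gl.
have hb := blk_pres2 hc hc' bV bE hs ht hl hnn hp.
exact: (build1 hc hc' bV bE hs ht hl hb).
Qed.
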